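(* If $G$ is a connected graph with $|V(G)| = n > 1$, then some value occurs at least $\left\lceil 2n/\tau(G) \right\rceil$ times in the detour sequence of $G$ (that is, the detour sequence of $G$ has a repetition of length at least $\lceil 2n/\tau(G)\rceil$).
   Context: All graphs are finite and simple. The order of a path is its number of vertices. For a vertex $v$ of $G$, $\tau(v)$ is the order of a longest path in $G$ having $v$ as an endvertex, and $\tau(G)=\max_v \tau(v)$ is the order of a longest path in $G$. The detour sequence of $G$ is the nondecreasing sequence of the values $\tau(v)$, $v\in V(G)$ (one term per vertex). A repetition in a nondecreasing sequence is a maximal block of at least two consecutive equal terms; its length is the number of terms in the block. *)

(* Defs.v *)
From mathcomp Require Import all_boot.
Set Implicit Arguments. Unset Strict Implicit. Unset Printing Implicit Defensive.

(* A finite simple graph: vertex type T : finType, adjacency e : rel T,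
   assumed symmetric and irreflexive in the theorem. *)

(* v :: s is a path in the graph (distinct vertices, consecutive adjacent),
   having v as an endvertex; its order (number of vertices) is (size s).+1. *)
Definition gpath_from (T : finType) (e : rel T) (v : T) (s : seq T) : bool :=
  uniq (v :: s) && path e v s.

(* tau(v): order of a longest path with v as an endvertex.
   A path has at most #|T| vertices, so s ranges over k-tuples, k < #|T|. *)
Definition tau (T : finType) (e : rel T) (v : T) : nat :=
  \max_(k < #|T| | [exists s : k.-tuple T, gpath_from e v s]) k.+1.

Definition tauG (T : finType) (e : rel T) : nat := \max_(v : T) tau e v.

Definition detour_mult (T : finType) (e : rel T) (k : nat) : nat :=
  #|[set v : T | tau e v == k]|.

Definition ceil_div (a b : nat) : nat := (a + b.-1) %/ b.

(* Main.v *)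
Require Import Defs.
From mathcomp Require Import all_boot.
From mathcomp Require Import zify.
Set Implicit Arguments. Unset Strict Implicit. Unset Printing Implicit Defensive.

Section G.
Variables (T : finType) (e : rel T).
Hypotheses (e_sym : symmetric e) (e_irr : irreflexive e).

Lemma gpath_size v s : gpath_from e v s -> (size s).+1 <= #|T|.
Proof.
case/andP=> U _; have <- : size (v :: s) = (size s).+1 by [].
by move/card_uniqP: U => <-; rewrite max_card.
Qed.

Lemma tau_ge v s : gpath_from e v s -> (size s).+1 <= tau e v.
Proof.
move=> H; have Hs := gpath_size H; rewrite /tau.
apply: (@leq_bigmax_cond _ _ (fun k : 'I_#|T| => k.+1) (Ordinal Hs)).
by apply/existsP; exists (in_tuple s).
Qed.

Lemma tau_ex v : exists s, gpath_from e v s /\ tau e v = (size s).+1.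
Proof.
have H1 : gpath_from e v [::] by rewrite /gpath_from /=.
have H0 := gpath_size H1; rewrite /tau.
have P0 : [exists s : (Ordinal H0).-tuple T, gpath_from e v s].
  by apply/existsP; exists [tuple].
rewrite (bigmax_eq_arg (Ordinal H0)) //.
case: arg_maxnP => // i /existsP [s Hs] _.
by exists s; rewrite size_tuple.
Qed.

Lemma tau_le v : tau e v <= #|T|.
Proof. by have [s [H ->]] := tau_ex v; apply: gpath_size H. Qed.

Lemma half p1 w p2 : uniq (p1 ++ w :: p2) -> sorted e (p1 ++ w :: p2) ->
  gpath_from e w p2 /\ gpath_from e w (rev p1).
Proof.
rewrite cat_uniq sorted_cat_cons => /and3P [U1 Hn U2] /andP [S1 S2].
split; first by rewrite /gpath_from U2.
rewrite /gpath_from.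
have wp1 : w \notin p1 by apply: contra Hn => H; apply/hasP; exists w; rewrite ?inE ?eqxx.
apply/andP; split; first by rewrite /= mem_rev wp1 rev_uniq.
have : sorted e (rev (rcons p1 w)).
  have Heq : (fun z => e^~ z) =2 e by move=> x y; rewrite /= e_sym.
  by rewrite rev_sorted (eq_sorted Heq).
by rewrite rev_rcons.
Qed.

Lemma via_half v q w r : path e v (rcons q w) -> uniq (v::q) ->
  gpath_from e w r -> (forall x, x \in v::q -> x \notin w::r) ->
  gpath_from e v (q ++ w :: r).
Proof.
move=> Hp Uq /andP [Ur Pr] hd; apply/andP; split.
  have -> : v :: (q ++ w :: r) = (v :: q) ++ (w :: r) by [].
  rewrite cat_uniq Uq Ur andbT; apply/hasPn => x xr; apply/negP => xq.
  by move: (hd x xq); rewrite xr.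
by rewrite -cat_rcons cat_path Hp last_rcons.
Qed.

Lemma far (A : seq T) p v : uniq (v::p) -> path e v p -> last v p \in A ->
  v \notin A -> exists q w, [/\ path e v (rcons q w), w \in A, uniq (v::q),
   all (fun x => x \notin A) (v::q) & {subset q <= p}].
Proof.
elim: p v => [|x p IH] v U Hp Hl Hv; first by rewrite /= Hl in Hv.
move: Hp => /= /andP [evx Hp].
case xA: (x \in A).
  exists [::], x; split => //=; by rewrite ?evx ?Hv.
move: U; rewrite /= inE negb_or => /andP [/andP [vx vp] U].
have [q [w [H1 H2 H3 H4 H5]]] := IH x U Hp Hl (negbT xA).
exists (x :: q), w; split => //. 
- by rewrite /= evx.
- rewrite H3 andbT inE negb_or vx /=; apply: contra vp; exact: H5.
- by rewrite Hv.
- move=> y; rewrite !inE => /orP [->//|/H5 ->]; by rewrite orbT.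
Qed.


Lemma arith_far (a b c : seq T) tv : size c + (size b).+1 < tv ->
  size c + (size a).+1 < tv ->
  size a + (size b).+1 - (size a + (size b).+1)./2 < tv.
Proof.
have ht := odd_double_half (size a + (size b).+1).
move: ht; set x := size a; set y := size b; set z := size c; clearbody x y z.
case: (odd _) => /= ht; move: ht; rewrite -addnn; set h := (_ ./2); clearbody h; move=> ht; lia.
Qed.

Lemma lower (P : seq T) x0 v : (forall x y, connect e x y) ->
  uniq P -> sorted e P -> x0 \in P ->
  size P - (size P)./2 < tau e v \/ (odd (size P) /\ v = nth x0 P (size P)./2).
Proof.
move=> conn U S x0P.
case vP: (v \in P).
  move: U S; case/splitPr: vP => p1 p2 U S.
  have [g1 g2] := half U S.
  have t1 := tau_ge g1; have t2 := tau_ge g2; rewrite size_rev in t2.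
  rewrite size_cat /=.
  case: (ltngtP (size p1) (size p2)) => [Hne|Hne|Heq]; last first.
    right.
    have Hh : (size p1 + (size p2).+1)./2 = size p1.
      by rewrite -Heq addnS addnn /= uphalf_double.
    rewrite Hh nth_cat ltnn subnn /=; split => //.
    by rewrite -Heq addnS addnn /= odd_double.
  1,2: left; have ht := odd_double_half (size p1 + (size p2).+1); set a := size p1 in t1 t2 Hne ht *; set b := size p2 in t1 t2 Hne ht *; clearbody a b; move: ht; case: (odd _) => /= ht; move: ht; rewrite -addnn; set h := (_ ./2); clearbody h; move=> ht; lia.
have [p Hp Hl] := connectP (conn v x0).
case: (shortenP Hp) Hl => p' Hp' Up' _ Hl.
have Hl' : last v p' \in P by rewrite -Hl.
have [q [w [H1 H2 H3 H4 _]]] := far Up' Hp' Hl' (negbT vP).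
move: U S H4; case/splitPr: H2 => p1 p2 U S H4.
have [g1 g2] := half U S.
have D1 : forall x, x \in v::q -> x \notin w::p2.
  move=> x xq; move/allP: H4 => /(_ x xq); rewrite mem_cat negb_or.
  by case/andP.
have D2 : forall x, x \in v::q -> x \notin w::rev p1.
  move=> x xq; move/allP: H4 => /(_ x xq); rewrite mem_cat negb_or !inE mem_rev.
  case/andP => H5 H6; apply/negP => /orP [Hx|Hx]; [by rewrite Hx in H6 | by rewrite Hx in H5].
have k1 := tau_ge (via_half H1 H3 g1 D1).
have k2 := tau_ge (via_half H1 H3 g2 D2).
rewrite !size_cat /= ?size_rev in k1 k2.
rewrite size_cat /=; left; exact: arith_far k1 k2.
Qed.


Lemma count_bound (f : T -> nat) lo n (A : {set T}) :
  {in A, forall v, lo <= f v < lo + n} ->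
  #|A| <= \sum_(lo <= i < lo + n) #|[set v | f v == i]|.
Proof.
elim: n A => [|n IH] A HA.
  rewrite addn0 big_geq // leqn0 cards_eq0; apply/eqP/setP => x.
  rewrite in_set0; apply/negP => xA; have := HA x xA; lia.
rewrite addnS big_nat_recr ?leq_addr //=.
rewrite -(cardsID [set v | f v == lo + n] A) addnC; apply: leq_add.
  apply: IH => x; rewrite !inE => /andP [H1 H2]; have := HA x H2.
  move: H1; set y := f x; clearbody y; move=> H1 H3; lia.
by apply: subset_leq_card; apply: subsetIr.
Qed.

End G.
Lemma arith_odd : forall M h n a b t, a <= h * M -> b <= 1 -> t <= n -> 1 < t -> 1 + (h + h) = t -> a + b = n -> 2 * n + t.-1 < M.+1 * t.
Proof.
move=> M h n a b t H1 H2 H5 H6 H3 H4.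
have E : M.+1 * t = M.+1 + (h*M + h*M) + (h + h) by rewrite -H3; nia.
rewrite E; set hm := h * M in H1 E *; clearbody hm.
have M2 : 2 <= M.
  case: M hm H1 E => [|[|M]] hm H1 E //; rewrite ?muln0 ?muln1 in H1 *; try lia.
lia.
Qed.
Lemma arith_even : forall M h n a b t, a <= h * M -> b <= 0 -> t <= n -> 1 < t -> 0 + (h + h) = t -> a + b = n -> 2 * n + t.-1 < M.+1 * t.
Proof.
move=> M h n a b t H1 H2 H5 H6 H3 H4.
have E : M.+1 * t = (h*M + h*M) + (h + h) by rewrite -H3; nia.
rewrite E; set hm := h * M in H1 E *; clearbody hm.
lia.
Qed.

Theorem theorem1p7 (T : finType) (e : rel T)
  (e_sym : symmetric e) (e_irr : irreflexive e)
  (e_conn : forall x y : T, connect e x y)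
  (hn : 1 < #|T|) :
  exists k : nat, ceil_div (2 * #|T|) (tauG e) <= detour_mult e k.
Proof.
have [x [y [_ _ xy]]] := card_gt1P hn.
have H0 : 0 < #|T| by apply: leq_trans hn.
have [v0 Hv0] := eq_bigmax (fun v => tau e v) H0.
have [s0 [g0 Hs0]] := tau_ex e v0.
set t := tauG e.
have Ht : size (v0 :: s0) = t by rewrite /t /tauG Hv0 Hs0.
have tle : forall v, tau e v <= t by move=> v; rewrite /t /tauG; exact: (@leq_bigmax T (fun v => tau e v) v).
have tn : t <= #|T| by rewrite /t /tauG Hv0; apply: tau_le.
have t2 : 2 <= t.
  have [p Hp Hl] := connectP (e_conn x y).
  case: p Hp Hl => [|z p] /=; first by move=> _ Hl; rewrite Hl eqxx in xy.
  case/andP => exz _ _.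
  have g : gpath_from e x [:: z].
    rewrite /gpath_from /= exz !andbT inE; apply/eqP => Hz.
    by rewrite Hz e_irr in exz.
  exact: leq_trans (tau_ge g) (tle x).
move: g0 => /andP [U0 S0].
have low := fun v => lower e_sym (x0 := v0) v e_conn U0 S0 (mem_head _ _).
rewrite Ht in low.
set h := t./2 in low.
set c := nth v0 (v0 :: s0) h in low.
set S := [set v | t - h < tau e v].
set M := \max_(v : T) detour_mult e (tau e v).
have [vM HvM] := eq_bigmax (fun v => detour_mult e (tau e v)) H0.
exists (tau e vM); rewrite -HvM -/M.
have multM : forall i, detour_mult e i <= M.
  move=> i; rewrite /detour_mult.
  case: (posnP #|[set v | tau e v == i]|) => [->//|/card_gt0P [v]].
  rewrite inE => /eqP <-.
  exact: (@leq_bigmax T (fun v => detour_mult e (tau e v)) v).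
have hle : h <= t by rewrite /h -{2}(odd_double_half t) -addnn; lia.
have SM : #|S| <= h * M.
  have := @count_bound T (tau e) (t - h).+1 h S.
  have -> : (t - h).+1 + h = t.+1 by lia.
  move=> H; apply: leq_trans (H _) _.
    move=> v; rewrite inE => Hv; rewrite Hv /=; have := tle v; lia.
  apply: (@leq_trans (\sum_((t - h).+1 <= i < t.+1) M)).
    by apply: leq_sum => i _; exact: multM i.
  by rewrite sum_nat_const_nat; have -> : t.+1 - (t - h).+1 = h by lia.
have SC : #|~: S| <= odd t.
  case ot: (odd t).
    have : ~: S \subset [set c].
      apply/subsetP => v; rewrite !inE => Hv.
      by case: (low v) => [H|[_ ->]]; [rewrite H in Hv|].
    by move/subset_leq_card; rewrite cards1.
  rewrite leqn0 cards_eq0; apply/eqP/setP => v; rewrite !inE.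
  by case: (low v) => [->|[]] //; rewrite ot.
have := cardsC S.
have := odd_double_half t; rewrite -/h -addnn.
rewrite /ceil_div -ltnS ltn_divLR; last by lia.
move: SM SC tn t2; set n := #|T|; set a := #|S|; set b := #|~: S|; clearbody M h n a b t.
case: (odd t) => /= H1 H2 H5 H6 H3 H4.
  exact: (arith_odd H1 H2 H5 H6 H3 H4).
exact: (arith_even H1 H2 H5 H6 H3 H4).
Qed.
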